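(* Let $F\colon\mathsf{Ring}\to\mathsf{Set}$ be a contravariant functor whose restriction to the full subcategory $\mathsf{CommRing}$ of commutative rings is isomorphic to $\operatorname{Spec}$. If $R$ is any ring admitting a ring homomorphism $\mathbb{C}\to R$, then $F(\mathrm{M}_n(R))=\varnothing$ for every $n\geq 3$.
   Context: Rings are unital and ring homomorphisms preserve the identity. $\operatorname{Spec}$ is the contravariant functor on commutative rings sending a ring to its set of prime ideals and a homomorphism $f$ to $P\mapsto f^{-1}(P)$. $\mathrm{M}_n(R)$ is the ring of $n\times n$ matrices over $R$. *)

(* Defs.v *)
From HB Require Import structures.
From mathcomp Require Import all_boot all_order all_algebra.
From mathcomp Require Import complex.
From mathcomp Require Import Rstruct.
From Stdlib Require Import Reals.

Set Implicit Arguments.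
Unset Strict Implicit.
Unset Printing Implicit Defensive.

Import GRing.Theory.
Local Open Scope ring_scope.

Definition Cplx : fieldType := complex.complex R.

Definition prime_ideal (A : comPzRingType) (P : A -> Prop) : Prop :=
  [/\ P 0,
      (forall x y, P x -> P y -> P (x + y)),
      (forall a x, P x -> P (a * x)),
      ~ P 1
    & (forall x y, P (x * y) -> P x \/ P y)].

Definition Spec (A : comPzRingType) : Type := {P : A -> Prop | prime_ideal P}.

Lemma prime_ideal_preim (A B : comPzRingType) (f : {rmorphism A -> B})
  (P : B -> Prop) : prime_ideal P -> prime_ideal (fun x => P (f x)).
Proof.
case=> P0 PD PM P1 Pp; split.
- by rewrite rmorph0.
- by move=> x y Px Py; rewrite rmorphD; apply: PD.
- by move=> a x Px; rewrite rmorphM; apply: PM.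
- by rewrite rmorph1.
- by move=> x y; rewrite rmorphM; apply: Pp.
Qed.

Definition Spec_map (A B : comPzRingType) (f : {rmorphism A -> B})
  (P : Spec B) : Spec A :=
  exist _ (fun x => proj1_sig P (f x)) (prime_ideal_preim f (proj2_sig P)).

Record ring_cofunctor := RingCofunctor {
  fobj : pzRingType -> Type;
  fmap : forall (A B : pzRingType), {rmorphism A -> B} -> fobj B -> fobj A;
  fmap_id : forall (A : pzRingType) (f : {rmorphism A -> A}),
    (forall x, f x = x) -> forall y, fmap f y = y;
  fmap_comp : forall (A B C : pzRingType) (f : {rmorphism A -> B})
    (g : {rmorphism B -> C}) (h : {rmorphism A -> C}),
    (forall x, h x = g (f x)) -> forall z, fmap h z = fmap f (fmap g z)
}.

Definition restricts_to_Spec (F : ring_cofunctor) : Prop :=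
  exists phi : forall A : comPzRingType, fobj F A -> Spec A,
    (forall A : comPzRingType, bijective (phi A)) /\
    (forall (A B : comPzRingType) (f : {rmorphism A -> B}) (x : fobj F B),
        phi A (@fmap F A B f x) = Spec_map f (phi B x)).

(* Main.v *)
Require Import Defs.
From HB Require Import structures.
From mathcomp Require Import all_boot all_order all_algebra.
From mathcomp Require Import perm complex Rstruct.
From Stdlib Require Import Classical ClassicalEpsilon.
From Stdlib Require Rdefinitions.
Set Implicit Arguments.
Unset Strict Implicit.
Unset Printing Implicit Defensive.
Import GRing.Theory.
Local Open Scope ring_scope.


Definition Ak (k : nat) := {ffun 'I_k -> rat}.
HB.instance Definition _ k := GRing.PzRing.on (Ak k).
Lemma Ak_mulC k : commutative (@GRing.mul (Ak k)).
Proof. by move=> a b; apply/ffunP=> i; rewrite !ffunE mulrC. Qed.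
HB.instance Definition _ k := GRing.PzRing_hasCommutativeMul.Build (Ak k) (@Ak_mulC k).

Definition ctx n k (D : 'I_k -> 'M[rat]_n) : Prop :=
  (forall i j, D i *m D j = if i == j then D i else 0) /\ \sum_i D i = 1%:M.

Definition homf n k (D : 'I_k -> 'M[rat]_n) (a : Ak k) : 'M[rat]_n :=
  \sum_i a i *: D i.

Lemma homf_nmod n k (D : 'I_k -> 'M[rat]_n) : nmod_morphism (homf D).
Proof.
split.
  by rewrite /homf big1 // => i _; rewrite ffunE scale0r.
move=> a b; rewrite /homf -big_split; apply: eq_bigr => i _.
by rewrite ffunE scalerDl.
Qed.

Lemma homf_mon n k (D : 'I_k -> 'M[rat]_n) : ctx D -> monoid_morphism (homf D).
Proof.
case=> HD HS; split.
  change (homf D 1 = 1%:M).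
  rewrite /homf -HS; apply: eq_bigr => i _.
  by rewrite ffunE scale1r.
move=> a b; change (homf D (a * b) = homf D a *m homf D b).
rewrite /homf mulmx_suml; apply: eq_bigr => i _.
rewrite mulmx_sumr (bigD1 i) //= big1 ?addr0.
  by rewrite -scalemxAl -scalemxAr HD eqxx scalerA ffunE.
move=> j Hji; rewrite -scalemxAl -scalemxAr HD.
by rewrite eq_sym (negbTE Hji) !scaler0.
Qed.

Definition homR n k (D : 'I_k -> 'M[rat]_n) (H : ctx D) : {rmorphism Ak k -> 'M[rat]_n} :=
  HB.pack (homf D) (GRing.isNmodMorphism.Build _ _ _ (homf_nmod D))
     (GRing.isMonoidMorphism.Build _ _ _ (homf_mon H)).


Definition dl k (i : 'I_k) : Ak k := [ffun j => (i == j)%:R].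

Definition trv (F : ring_cofunctor) (phi : forall A : comPzRingType, fobj F A -> Spec A)
  n (y : fobj F 'M[rat]_n) k (D : 'I_k -> 'M[rat]_n) (H : ctx D) (i : 'I_k) : Prop :=
  ~ proj1_sig (phi (Ak k) (@fmap F _ _ (homR H) y)) (dl i).

Lemma prime_one (A : comPzRingType) (P : A -> Prop) k (e : 'I_k -> A) :
  prime_ideal P -> (forall i j, i != j -> e i * e j = 0) -> \sum_i e i = 1 ->
  (exists i, ~ P (e i)) /\ (forall i j, ~ P (e i) -> ~ P (e j) -> i = j).
Proof.
case=> P0 PD PM P1 Pp He Hs; split.
  apply: NNPP => Hn; apply: P1; rewrite -Hs.
  apply: (big_ind P) => // i _; apply: NNPP => Hi; apply: Hn; by exists i.
move=> i j Hi Hj; apply: NNPP => Hij.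
have : P (e i * e j) by rewrite He; [exact: P0 | apply/eqP].
by case/Pp.
Qed.

Lemma trv_one F phi n y k D (H : ctx D) :
  (exists i, @trv F phi n y k D H i) /\
  (forall i j, @trv F phi n y k D H i -> @trv F phi n y k D H j -> i = j).
Proof.
apply: prime_one; first exact: (proj2_sig (phi (Ak k) _)).
  move=> i j Hij; apply/ffunP=> l; rewrite !ffunE.
  case: (eqVneq i l) => [<-|]; last by rewrite mul0r.
  by rewrite eq_sym (negbTE Hij) mulr0.
apply/ffunP=> l; rewrite sum_ffunE !ffunE (bigD1 l) //= ffunE eqxx big1 ?addr0 //.
by move=> i Hi; rewrite ffunE (negbTE Hi).
Qed.

Definition C2 n (E : 'M[rat]_n) : 'I_2 -> 'M[rat]_n :=
  fun j => if j == ord0 then E else 1%:M - E.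

Definition tE F phi n y (E : 'M[rat]_n) : Prop :=
  forall HC : ctx (C2 E), @trv F phi n y 2 (C2 E) HC ord0.

Lemma ctx_C2 n k (D : 'I_k -> 'M[rat]_n) (H : ctx D) i : ctx (C2 (D i)).
Proof.
case: H => HD HS.
have HE : D i *m D i = D i by rewrite HD eqxx.
split; last by rewrite big_ord_recr big_ord1 /C2 /= addrC subrK.
move=> a b; rewrite /C2.
case: a => [[|[|a]] Ha] //; case: b => [[|[|b]] Hb] //=;
  rewrite ?mulmxBl ?mulmxBr ?mul1mx ?mulmx1 ?HE ?subrr //.
by rewrite subr0.
Qed.

Definition tf k (i : 'I_k) (a : Ak 2) : Ak k :=
  [ffun j => if j == i then a ord0 else a ord_max].

Lemma tf_nmod k (i : 'I_k) : nmod_morphism (tf i).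
Proof.
split; first by apply/ffunP=> j; rewrite !ffunE; case: ifP.
by move=> a b; apply/ffunP=> j; rewrite !ffunE; case: ifP.
Qed.

Lemma tf_mon k (i : 'I_k) : monoid_morphism (tf i).
Proof.
split; first by apply/ffunP=> j; rewrite !ffunE; case: ifP.
by move=> a b; apply/ffunP=> j; rewrite !ffunE; case: ifP.
Qed.

Definition tR k (i : 'I_k) : {rmorphism Ak 2 -> Ak k} :=
  HB.pack (tf i) (GRing.isNmodMorphism.Build _ _ _ (tf_nmod i))
     (GRing.isMonoidMorphism.Build _ _ _ (tf_mon i)).

Definition natural (F : ring_cofunctor) (phi : forall A : comPzRingType, fobj F A -> Spec A) :=
  forall (A B : comPzRingType) (f : {rmorphism A -> B}) (x : fobj F B),
        phi A (@fmap F A B f x) = Spec_map f (phi B x).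

Lemma trv_C2 F phi (Hnat : natural phi) n y k D (H : ctx D) i (HC : ctx (C2 (D i))) :
  @trv F phi n y k D H i <-> @trv F phi n y 2 (C2 (D i)) HC ord0.
Proof.
have Ext : forall a, homR HC a = homR H (tR i a).
  move=> a /=; rewrite /homf big_ord_recr big_ord1 /= /C2 /=.
  rewrite (bigD1 i) //= ffunE eqxx.
  have -> : widen_ord (leqnSn 1) ord0 = ord0 :> 'I_2 by apply: val_inj.
  congr (_ + _).
  case: H => _ HS.
  have -> : 1%:M - D i = \sum_(j | j != i) D j.
    by rewrite -HS (bigD1 i) //= addrC addrK.
  rewrite scaler_sumr; apply: eq_bigr => j Hj; by rewrite ffunE (negbTE Hj).
have E := @fmap_comp F _ _ _ (tR i) (homR H) (homR HC) Ext y.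
rewrite /trv E Hnat /=.
have -> : tf i (dl ord0) = dl i.
  apply/ffunP=> j; rewrite /tf !ffunE.
  by case: (eqVneq j i).
by [].
Qed.

Lemma trv_tE F phi (Hnat : natural phi) n y k D (H : ctx D) i :
  @trv F phi n y k D H i <-> tE phi y (D i).
Proof.
split; first by move=> h HC; exact: (proj1 (trv_C2 Hnat y H HC) h).
move=> h; exact: (proj2 (trv_C2 Hnat y H (ctx_C2 H i)) (h _)).
Qed.

Lemma compl_mx n (S Y : 'M[rat]_n) : Y *m S = Y -> S *m Y = Y ->
  Y *m (1%:M - S) = 0 /\ (1%:M - S) *m Y = 0.
Proof. by move=> h1 h2; rewrite mulmxBr mulmxBl mulmx1 mul1mx h1 h2 subrr. Qed.

Lemma compl_idem n (S : 'M[rat]_n) : S *m S = S -> (1%:M - S) *m (1%:M - S) = 1%:M - S.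
Proof.
by move=> h; rewrite mulmxBr mulmx1 mulmxBl mul1mx h subrr subr0.
Qed.

Lemma ctx3_gen n (A B : 'M[rat]_n) :
  A *m A = A -> B *m B = B -> A *m B = 0 -> B *m A = 0 ->
  ctx (fun i : 'I_3 => [:: A; B; 1%:M - (A + B)]`_i).
Proof.
move=> hA hB hAB hBA.
have SS : (A + B) *m (A + B) = A + B by rewrite mulmxDl !mulmxDr hA hB hAB hBA addr0 add0r.
have [h1 h2] : A *m (1%:M - (A + B)) = 0 /\ (1%:M - (A + B)) *m A = 0.
  by apply: compl_mx; rewrite ?mulmxDl ?mulmxDr hA ?hAB ?hBA addr0.
have [h3 h4] : B *m (1%:M - (A + B)) = 0 /\ (1%:M - (A + B)) *m B = 0.
  by apply: compl_mx; rewrite ?mulmxDl ?mulmxDr hB ?hAB ?hBA add0r.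
split; last by rewrite !big_ord_recl big_ord0 /= addr0 addrA addrC subrK.
move=> [[|[|[|i]]] Hi] [[|[|[|j]]] Hj] //=; rewrite ?compl_idem //.
Qed.

Lemma ctx4_gen n (A B C : 'M[rat]_n) :
  A *m A = A -> B *m B = B -> C *m C = C ->
  A *m B = 0 -> B *m A = 0 -> A *m C = 0 -> C *m A = 0 -> B *m C = 0 -> C *m B = 0 ->
  ctx (fun i : 'I_4 => [:: A; B; C; 1%:M - (A + B + C)]`_i).
Proof.
move=> hA hB hC hAB hBA hAC hCA hBC hCB.
have SS : (A + B + C) *m (A + B + C) = A + B + C.
  by rewrite !mulmxDl !mulmxDr hA hB hC hAB hBA hAC hCA hBC hCB !addr0 !add0r.
have [h1 h2] : A *m (1%:M - (A + B + C)) = 0 /\ (1%:M - (A + B + C)) *m A = 0.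
  by apply: compl_mx; rewrite ?mulmxDl ?mulmxDr hA ?hAB ?hBA ?hAC ?hCA !addr0.
have [h3 h4] : B *m (1%:M - (A + B + C)) = 0 /\ (1%:M - (A + B + C)) *m B = 0.
  by apply: compl_mx; rewrite ?mulmxDl ?mulmxDr hB ?hAB ?hBA ?hBC ?hCB ?addr0 ?add0r.
have [h5 h6] : C *m (1%:M - (A + B + C)) = 0 /\ (1%:M - (A + B + C)) *m C = 0.
  by apply: compl_mx; rewrite ?mulmxDl ?mulmxDr hC ?hAC ?hCA ?hBC ?hCB ?addr0 ?add0r.
split; last by rewrite !big_ord_recl big_ord0 /= addr0 addrA addrA addrC subrK.
move=> [[|[|[|[|i]]]] Hi] [[|[|[|[|j]]]] Hj] //=; rewrite ?compl_idem //.
Qed.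

Definition vecs : seq (int * int * int) := [:: (1, 0, 0); (0, 0, 1); (0, 1, 0); (0, 1, (-1)); (0, 1, 1); (1, (-1), (-1)); (2, 1, 1); (1, 0, (-2)); (2, 0, 1); (1, 0, 1); (1, 0, (-1)); (1, (-1), 1); (2, 1, (-1)); (1, 1, 0); (1, (-1), (-2)); (1, (-1), 0); (1, (-1), 2); (1, 1, (-1)); (2, (-1), 1); (1, 1, 2); (1, 1, 1); (1, 1, (-2)); (2, (-1), (-1)); (1, 0, 2); (2, 0, (-1))].
Definition tris : seq (nat * nat * nat) := [:: (0, 3, 4); (0, 1, 2); (1, 15, 13); (3, 5, 6); (3, 20, 22); (2, 7, 8); (2, 10, 9); (2, 23, 24); (4, 11, 12); (4, 17, 18); (14, 11, 13); (5, 16, 13); (15, 21, 20); (15, 17, 19)].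
Definition prs : seq (nat * nat) := [:: (1, 2); (1, 15); (1, 0); (1, 13); (3, 4); (3, 5); (3, 0); (3, 20); (3, 22); (3, 6); (2, 7); (2, 10); (2, 0); (2, 9); (2, 23); (2, 24); (2, 8); (4, 11); (4, 0); (4, 17); (4, 18); (4, 12); (14, 11); (14, 13); (14, 8); (5, 16); (5, 9); (5, 13); (5, 6); (15, 21); (15, 17); (15, 13); (15, 20); (15, 19); (11, 10); (11, 13); (11, 12); (16, 13); (16, 24); (7, 18); (7, 8); (7, 6); (10, 9); (10, 20); (9, 17); (23, 22); (23, 24); (23, 12); (21, 20); (21, 8); (17, 19); (17, 18); (20, 22); (19, 24)].

Definition getv (a : seq bool) (i : nat) : option bool :=
  if (i < size a)%N then Some (nth false a i) else None.
Definition viol_t (a : seq bool) (t : nat * nat * nat) : bool :=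
  let l := [:: getv a t.1.1; getv a t.1.2; getv a t.2] in
  (2 <= count (pred1 (Some true)) l)%N || (count (pred1 (Some false)) l == 3)%N.
Definition viol_p (a : seq bool) (p : nat * nat) : bool :=
  (getv a p.1 == Some true) && (getv a p.2 == Some true).
Definition viol a := has (viol_t a) tris || has (viol_p a) prs.
Fixpoint search (fuel : nat) (a : seq bool) : bool :=
  if viol a then true else
  match fuel with O => false | S f => search f (rcons a true) && search f (rcons a false) end.

Lemma search_ok : search 25 [:: true].
Proof. by vm_compute. Qed.

Definition pref (b : nat -> bool) k := [seq b i | i <- iota 0 k].

Lemma getv_pref b k i : getv (pref b k) i = if (i < k)%N then Some (b i) else None.
Proof.
rewrite /getv /pref size_map size_iota; case: ifP => // Hi.
by rewrite (nth_map 0%N) ?size_iota // nth_iota.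
Qed.

Definition satb (b : nat -> bool) :=
  all (fun t => b t.1.1 + b t.1.2 + b t.2 == 1)%N tris &&
  all (fun p => ~~ (b p.1 && b p.2)) prs.

Lemma viol_pref b k : satb b -> viol (pref b k) = false.
Proof.
case/andP=> /allP Ht /allP Hp; apply/negbTE; rewrite negb_or; apply/andP; split.
  apply/hasPn => -[[x y] z] /Ht /=; rewrite /viol_t !getv_pref /=.
  case: (x < k)%N; case: (y < k)%N; case: (z < k)%N; case: (b x); case: (b y); case: (b z); done.
apply/hasPn => -[x y] /Hp; rewrite /viol_p !getv_pref /=.
case: (x < k)%N; case: (y < k)%N; case: (b x); case: (b y); done.
Qed.

Lemma search_sound b fuel k : satb b -> search fuel (pref b k) -> False.
Proof.
move=> Hs; elim: fuel k => [|f IH] k.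
  by rewrite [search _ _]/search viol_pref.
have -> : search f.+1 (pref b k) = if viol (pref b k) then true else
   search f (rcons (pref b k) true) && search f (rcons (pref b k) false) by [].
rewrite viol_pref //.
have E : rcons (pref b k) (b k) = pref b k.+1.
  by rewrite /pref -addn1 iotaD map_cat cats1.
case Hbk: (b k) E => E /andP [H1 H2]; apply: (IH k.+1); rewrite -E //.
Qed.

Lemma comb (b : nat -> bool) : b 0%N = true -> satb b -> False.
Proof.
move=> H0 Hs; apply: (@search_sound b 25 1 Hs).
have -> : pref b 1 = [:: true] by rewrite /pref /= H0.
exact: search_ok.
Qed.


Definition mx3 (f : nat -> nat -> rat) : 'M[rat]_3 := \matrix_(a < 3, b < 3) f a b.
Definition mul3f (f g : nat -> nat -> rat) a b := f a 0%N * g 0%N b + f a 1%N * g 1%N b + f a 2%N * g 2%N b.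
Definition all3 (P : nat -> nat -> bool) := all (fun a => all (P a) (iota 0 3)) (iota 0 3).

Lemma mx3_mul f g : mx3 f *m mx3 g = mx3 (mul3f f g).
Proof.
apply/matrixP=> a b; rewrite !mxE !big_ord_recl big_ord0 !mxE addr0 /mul3f /=.
by rewrite addrA.
Qed.

Lemma mx3_add f g : mx3 f + mx3 g = mx3 (fun a b => f a b + g a b).
Proof. by apply/matrixP=> a b; rewrite !mxE. Qed.

Lemma mx3_one : 1%:M = mx3 (fun a b => (a == b)%:R).
Proof. by apply/matrixP=> a b; rewrite !mxE. Qed.

Lemma mx3_eq f g : all3 (fun a b => f a b == g a b) -> mx3 f = mx3 g.
Proof.
rewrite /all3 => /allP H; apply/matrixP=> a b; rewrite !mxE.
have Ha : (a : nat) \in iota 0 3 by rewrite mem_iota add0n ltn_ord.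
move/H/allP: Ha => Ha.
by apply/eqP/Ha; rewrite mem_iota add0n ltn_ord.
Qed.

Definition comp (u : int * int * int) (a : nat) : int :=
  match a with O => u.1.1 | S O => u.1.2 | _ => u.2 end.
Definition dotu (u : int * int * int) : int := u.1.1 * u.1.1 + u.1.2 * u.1.2 + u.2 * u.2.
Definition xf (u : int * int * int) (a b : nat) : rat :=
  (comp u a * comp u b)%:~R / (dotu u)%:~R.
Definition vec (m : nat) := nth (0, 0, 0) vecs m.
Definition X (m : nat) : 'M[rat]_3 := mx3 (xf (vec m)).

Definition idemb m := all3 (fun a b => mul3f (xf (vec m)) (xf (vec m)) a b == xf (vec m) a b).
Definition orthb m m' := all3 (fun a b => mul3f (xf (vec m)) (xf (vec m')) a b == 0).
Definition ok_prs := all (fun p => [&& idemb p.1, idemb p.2, orthb p.1 p.2 & orthb p.2 p.1]) prs.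
Definition ok_tris := all (fun t =>
  [&& all3 (fun a b => xf (vec t.1.1) a b + xf (vec t.1.2) a b + xf (vec t.2) a b == (a == b)%:R),
      idemb t.1.1, idemb t.1.2, idemb t.2,
      orthb t.1.1 t.1.2, orthb t.1.2 t.1.1, orthb t.1.1 t.2, orthb t.2 t.1.1,
      orthb t.1.2 t.2 & orthb t.2 t.1.2]) tris.
Definition ok_e0 := all3 (fun a b => xf (vec 0) a b == ((a == 0%N) && (b == 0%N))%:R).

Lemma ok_all : [&& ok_prs, ok_tris & ok_e0].
Proof. by vm_compute. Qed.

Lemma X_idem m : idemb m -> X m *m X m = X m.
Proof. by move=> H; rewrite /X mx3_mul; apply: mx3_eq. Qed.
Lemma X_orth m m' : orthb m m' -> X m *m X m' = 0.
Proof.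
move=> H; rewrite /X mx3_mul.
have -> : (0 : 'M[rat]_3) = mx3 (fun _ _ => 0) by apply/matrixP=> a b; rewrite !mxE.
exact: mx3_eq.
Qed.
Lemma X_e0 : ok_e0 -> X 0 = delta_mx 0 0.
Proof.
move=> H; have -> : X 0 = mx3 (fun a b => ((a == 0%N) && (b == 0%N))%:R) by apply: mx3_eq.
apply/matrixP=> a b; rewrite !mxE.
by case: a => [[|a] Ha]; case: b => [[|b] Hb].
Qed.
Lemma X_sum x y z : all3 (fun a b => xf (vec x) a b + xf (vec y) a b + xf (vec z) a b == (a == b)%:R) ->
  X x + X y + X z = 1%:M.
Proof. by move=> H; rewrite /X !mx3_add mx3_one; apply: mx3_eq. Qed.


Definition sj n (H3 : (3 <= n)%N) (j : 'I_n) (i : 'I_3) : 'I_n :=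
  tperm (widen_ord H3 ord0) j (widen_ord H3 i).

Lemma sj_inj n H3 j : injective (@sj n H3 j).
Proof. by move=> a b /perm_inj /(congr1 val) /= h; apply: val_inj. Qed.

Lemma sj0 n H3 j : @sj n H3 j ord0 = j.
Proof. by rewrite /sj tpermL. Qed.

Definition Bm n H3 j : 'M[rat]_(n, 3) := \matrix_(a, i) (a == @sj n H3 j i)%:R.

Lemma BtB n H3 j : (@Bm n H3 j)^T *m Bm H3 j = 1%:M.
Proof.
apply/matrixP=> i l; rewrite !mxE (bigD1 (sj H3 j i)) //= big1.
  by rewrite !mxE eqxx mul1r addr0 (inj_eq (@sj_inj n H3 j)).
by move=> a Ha; rewrite !mxE (negbTE Ha) mul0r.
Qed.

Definition Pm n H3 j (Y : 'M[rat]_3) : 'M[rat]_n := Bm H3 j *m Y *m (Bm H3 j)^T.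

Lemma Pm_mul n H3 j Y Z : @Pm n H3 j Y *m Pm H3 j Z = Pm H3 j (Y *m Z).
Proof.
rewrite /Pm !mulmxA -(mulmxA (Bm H3 j *m Y)) BtB mulmx1.
by rewrite ?mulmxA.
Qed.

Lemma Pm_add n H3 j Y Z : @Pm n H3 j Y + Pm H3 j Z = Pm H3 j (Y + Z).
Proof. by rewrite /Pm mulmxDr mulmxDl. Qed.

Lemma Pm0 n H3 j : @Pm n H3 j 0 = 0.
Proof. by rewrite /Pm mulmx0 mul0mx. Qed.

Lemma Pm_delta n H3 j : @Pm n H3 j (delta_mx 0 0) = delta_mx j j.
Proof.
apply/matrixP=> a b; rewrite /Pm !mxE.
rewrite !big_ord_recl !big_ord0 !mxE !big_ord_recl !big_ord0 !mxE /=.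
rewrite !mulr0 !mul0r !addr0 !mulr1 sj0.
by case: (a == j); case: (b == j); rewrite /= ?mulr1 ?mulr0 ?mul1r.
Qed.


Lemma ctx_coord n : ctx (fun i : 'I_n => (delta_mx i i : 'M[rat]_n)).
Proof.
split.
  move=> i j; rewrite mul_delta_mx_cond.
  by case: (eqVneq i j) => [->|h]; rewrite ?mulr1n ?mulr0n.
apply/matrixP=> a b; rewrite summxE !mxE (bigD1 a) //= big1 => [|i Hi]; rewrite !mxE.
  by rewrite eqxx /= addr0 eq_sym.
by rewrite eq_sym (negbTE Hi).
Qed.

Definition bo (P : Prop) : bool := if excluded_middle_informative P then true else false.

Lemma exactly3 (A B C : Prop) : A \/ B \/ C -> ~(A /\ B) -> ~(A /\ C) -> ~(B /\ C) ->
  (bo A + bo B + bo C == 1)%N.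
Proof.
move=> h1 h2 h3 h4; rewrite /bo.
case: (excluded_middle_informative A) => a; case: (excluded_middle_informative B) => b;
  case: (excluded_middle_informative C) => c //=; tauto.
Qed.

Lemma not2 (A B : Prop) : ~(A /\ B) -> ~~ (bo A && bo B).
Proof.
move=> h; rewrite /bo.
case: (excluded_middle_informative A) => a; case: (excluded_middle_informative B) => b //=; tauto.
Qed.

Lemma tE_one F (phi : forall A : comPzRingType, fobj F A -> Spec A) (Hnat : natural phi) n y k D (H : ctx D) :
  (exists i, @tE F phi n y (D i)) /\
  (forall i j : 'I_k, @tE F phi n y (D i) -> @tE F phi n y (D j) -> i = j).
Proof.
have [[i Hi] Hu] := trv_one phi y H; split.
  by exists i; apply/(trv_tE Hnat y H).
by move=> a b /(trv_tE Hnat y H) ha /(trv_tE Hnat y H) hb; apply: Hu.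
Qed.

Lemma main_rat F (phi : forall A : comPzRingType, fobj F A -> Spec A) (Hnat : natural phi) n (H3 : (3 <= n)%N) (y : fobj F 'M[rat]_n) : False.
Proof.
pose T := @tE F phi n y.
have [[jj Hjj] _] := tE_one Hnat y (ctx_coord n).
case/and3P: ok_all => /allP Hp /allP Ht He.
pose P m := Pm H3 jj (X m).
have P0 : P 0%N = delta_mx jj jj by rewrite /P X_e0 // Pm_delta.
pose Qc : 'M[rat]_n := 1%:M - Pm H3 jj 1%:M.
have Htri : forall t, t \in tris ->
    ctx (fun i : 'I_4 => [:: P t.1.1; P t.1.2; P t.2; Qc]`_i).
  move=> t /Ht /and5P [hs i1 i2 i3 /and5P [o12 o21 o13 o31 /andP [o23 o32]]].
  have -> : Qc = 1%:M - (P t.1.1 + P t.1.2 + P t.2).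
    by rewrite /Qc /P !Pm_add X_sum.
  by apply: ctx4_gen; rewrite /P Pm_mul ?X_idem ?X_orth ?Pm0.
have nQ : ~ T Qc.
  have t0 : (0%N, 3%N, 4%N) \in tris by [].
  have [_ Hu] := tE_one Hnat y (Htri _ t0).
  move=> hQ; have := Hu (@Ordinal 4 0 isT) (@Ordinal 4 3 isT).
  by rewrite /= P0 => /(_ Hjj hQ).
pose b m := bo (T (P m)).
apply: (@comb b).
  by rewrite /b /bo P0; case: excluded_middle_informative.
apply/andP; split; apply/allP.
  move=> t tt; have [[i Hi] Hu] := tE_one Hnat y (Htri _ tt).
  apply: exactly3.
  - move: Hi; case: i => [[|[|[|[|i]]]] Hi'] //= Hi; tauto.
  - by move=> [h1 h2]; have := Hu (@Ordinal 4 0 isT) (@Ordinal 4 1 isT) h1 h2.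
  - by move=> [h1 h2]; have := Hu (@Ordinal 4 0 isT) (@Ordinal 4 2 isT) h1 h2.
  - by move=> [h1 h2]; have := Hu (@Ordinal 4 1 isT) (@Ordinal 4 2 isT) h1 h2.
move=> p pp; move: (Hp p pp) => /and4P [i1 i2 o12 o21].
have Hc : ctx (fun i : 'I_3 => [:: P p.1; P p.2; 1%:M - (P p.1 + P p.2)]`_i).
  by apply: ctx3_gen; rewrite /P Pm_mul ?X_idem ?X_orth ?Pm0.
have [_ Hu] := tE_one Hnat y Hc.
apply: not2 => -[h1 h2].
by have := Hu (@Ordinal 3 0 isT) (@Ordinal 3 1 isT) h1 h2.
Qed.


Definition rC : {rmorphism rat -> Cplx} := @ratr (complex.complex Rdefinitions.R).

Theorem corollary4p1 (F : ring_cofunctor) :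
  restricts_to_Spec F ->
  forall (R : pzRingType), {rmorphism Cplx -> R} ->
  forall n : nat, (3 <= n)%N -> fobj F 'M[R]_n -> False.
Proof.
move=> [phi [_ Hnat]] R' f n H3 x.
pose fM : {rmorphism 'M[Cplx]_n -> 'M[R']_n} := map_mx f.
pose rM : {rmorphism 'M[rat]_n -> 'M[Cplx]_n} := map_mx rC.
exact: (@main_rat F phi Hnat n H3 (@fmap F _ _ rM (@fmap F _ _ fM x))).
Qed.
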